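(* Let $K$ be a field of characteristic $0$, $\theta=t\frac{d}{dt}$, $\mathcal{L}=\theta^n+\sum_{i=0}^{n-1}a_i\theta^i$ with $a_i\in K(t)$, and $\mathcal{M}_{\mathcal{L}}=K(t)[\theta]/K(t)[\theta]\mathcal{L}$ with generator $\eta$ and $\eta^{(i)}=\theta^i\eta$. Let $\langle\,,\rangle$ be a $K(t)$-bilinear horizontal pairing $\mathcal{M}_{\mathcal{L}}\times\mathcal{M}_{\mathcal{L}}\to K(t)$ such that $\langle\eta,\eta^{(i)}\rangle=0$ for $0\le i<n-1$, and put $\gamma=\langle\eta,\eta^{(n-1)}\rangle$. Then: (i) the pairing is uniquely determined by $\gamma$, and $\gamma=c\beta^{-1}$ for some $c\in K$, where $\beta$ is a $\beta$-factor of $\mathcal{L}$; (ii) the pairing is $(-1)^{n+1}$-symmetric; (iii) if $\gamma\neq0$ the pairing is a polarization.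
   Context: Horizontal means $\theta\langle x,y\rangle=\langle\theta x,y\rangle+\langle x,\theta y\rangle$. A $\beta$-factor of $\mathcal{L}$ is a non-zero solution (in some differential field extension of $K(t)$) of $n\,\theta\beta=2a_{n-1}\beta$. $\operatorname{Fil}^i$ is the $K(t)$-span of $\eta^{(j)}$, $0\le j\le n-1-i$; a polarization is a $K(t)$-bilinear, $(-1)^{n+1}$-symmetric, non-degenerate horizontal pairing with $\langle\operatorname{Fil}^i,\operatorname{Fil}^{n-i}\rangle=0$ for $0\le i\le n-1$. *)

(* Defs.v *)
From HB Require Import structures.
From mathcomp Require Import all_boot all_order all_algebra.
From mathcomp Require Import generic_quotient fraction.
Set Implicit Arguments. Unset Strict Implicit. Unset Printing Implicit Defensive.
Import Order.TTheory GRing.Theory Num.Theory.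
Local Open Scope ring_scope.
Local Open Scope quotient_scope.

Notation Kt K := {fraction {poly K}}.

Notation tofracK x := (@FracField.tofrac _ x).

Definition constKt (K : fieldType) (c : K) : Kt K := tofracK (c%:P).

(* theta = t d/dt on K(t), computed on the canonical representative
   p/q of x:  theta (p/q) = t (p' q - p q') / q^2. *)
Definition thetaKt (K : fieldType) (x : Kt K) : Kt K :=
  let r := repr x in
  let p := \n_r in let q := \d_r in
  tofracK ('X * (p^`() * q - p * q^`())) / tofracK (q ^+ 2).

(* The module M_L = K(t)[theta]/K(t)[theta] L, with
   L = theta^n + sum_{i<n} a_i theta^i, modelled on its K(t)-basis
   eta^(0), ..., eta^(n-1): an element sum_j x_j eta^(j) is the row x.
   The coefficients a_i (i < n) are given by a : nat -> K(t); values a i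
   for i >= n are irrelevant. *)
Section Module.
Variables (K : fieldType) (n : nat) (a : nat -> Kt K).

(* coordinate x_{n-1} (0 if n = 0) *)
Definition lastc (x : 'rV[Kt K]_n) : Kt K := \sum_(i < n | i.+1 == n) x 0 i.

(* the action of theta on M_L:
   theta (sum_j x_j eta^(j)) = sum_j theta(x_j) eta^(j) + sum_j x_j eta^(j+1),
   with eta^(n) = - sum_{i<n} a_i eta^(i). *)
Definition thetaM (x : 'rV[Kt K]_n) : 'rV[Kt K]_n :=
  \row_(j < n) (thetaKt (x 0 j) + (\sum_(i < n | i.+1 == j) x 0 i)
                - lastc x * a j).

Definition etaM : 'rV[Kt K]_n := \row_(j < n) (j == 0%N :> nat)%:R.

Definition etaD (i : nat) : 'rV[Kt K]_n := iter i thetaM etaM.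

Definition inFil (i : nat) (x : 'rV[Kt K]_n) : Prop :=
  exists f : nat -> Kt K, x = \sum_(j < n - i) f j *: etaD j.

Definition bilinear (B : 'rV[Kt K]_n -> 'rV[Kt K]_n -> Kt K) : Prop :=
  (forall (c : Kt K) x x' y, B (c *: x + x') y = c * B x y + B x' y) /\
  (forall (c : Kt K) x y y', B x (c *: y + y') = c * B x y + B x y').

Definition horizontal (B : 'rV[Kt K]_n -> 'rV[Kt K]_n -> Kt K) : Prop :=
  forall x y, thetaKt (B x y) = B (thetaM x) y + B x (thetaM y).

Definition admissible_pairing (B : 'rV[Kt K]_n -> 'rV[Kt K]_n -> Kt K) :=
  [/\ bilinear B, horizontal B &
      forall i : nat, (i < n.-1)%N -> B etaM (etaD i) = 0].

Definition eps_symmetric (B : 'rV[Kt K]_n -> 'rV[Kt K]_n -> Kt K) : Prop :=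
  forall x y, B x y = (-1) ^+ n.+1 * B y x.

Definition nondegenerate (B : 'rV[Kt K]_n -> 'rV[Kt K]_n -> Kt K) : Prop :=
  (forall x, (forall y, B x y = 0) -> x = 0) /\
  (forall y, (forall x, B x y = 0) -> y = 0).

Definition polarization (B : 'rV[Kt K]_n -> 'rV[Kt K]_n -> Kt K) : Prop :=
  [/\ bilinear B, eps_symmetric B, nondegenerate B, horizontal B &
      forall i : nat, (i <= n.-1)%N ->
        forall x y, inFil i x -> inFil (n - i) y -> B x y = 0].

End Module.

Definition diff_ext (K : fieldType) (E : fieldType) (d : E -> E)
  (iota : {rmorphism Kt K -> E}) : Prop :=
  [/\ forall x y, d (x + y) = d x + d y,
      forall x y, d (x * y) = d x * y + x * d y &
      forall x, d (iota x) = iota (thetaKt x)].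

Definition beta_factor (K : fieldType) (n : nat) (a : nat -> Kt K)
  (E : fieldType) (d : E -> E) (iota : {rmorphism Kt K -> E}) (b : E) :=
  b != 0 /\ n%:R * d b = 2%:R * iota (a n.-1) * b.

(* Main.v *)
Require Import Defs.
From HB Require Import structures.
From mathcomp Require Import all_boot all_order all_algebra.
From mathcomp Require Import generic_quotient fraction.
From mathcomp Require Import ring zify.
Import GRing.Theory.
Local Open Scope ring_scope.
Local Open Scope quotient_scope.

Lemma pi_frac (R : idomainType) (x : {fraction R}) :
  x = FracField.tofrac \n_(repr x) / FracField.tofrac \d_(repr x).
Proof.
have hd : FracField.tofrac \d_(repr x) != 0 by rewrite tofrac_eq0 denom_ratioP.
apply: (mulIf hd); rewrite divfK //.
rewrite -[x in x * _ = _]reprK.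
set r := repr x.
unlock FracField.tofrac.
transitivity (\pi_({fraction R}) (FracField.mulf r (Ratio \d_r 1))).
  by rewrite (FracField.pi_mul).
apply/eqmodP => /=.
rewrite FracField.equivfE /= /FracField.mulf !numden_Ratio ?oner_neq0 ?mulf_neq0 ?denom_ratioP ?oner_neq0 //.
by rewrite !mulr1 mulrC.
Qed.

Lemma frac_eq (R : idomainType) (a b c e : R) : b != 0 -> e != 0 ->
  a * e = c * b -> FracField.tofrac a / FracField.tofrac b = FracField.tofrac c / FracField.tofrac e.
Proof.
move=> b0 e0 h.
have tb : FracField.tofrac b != 0 by rewrite tofrac_eq0.
have te : FracField.tofrac e != 0 by rewrite tofrac_eq0.
apply: (mulIf tb); rewrite divfK //; apply: (mulIf te).
by rewrite mulrAC divfK // -!tofracM h.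
Qed.

Lemma frac_eq_inv (R : idomainType) (a b c e : R) : b != 0 -> e != 0 ->
  FracField.tofrac a / FracField.tofrac b = FracField.tofrac c / FracField.tofrac e -> a * e = c * b.
Proof.
move=> b0 e0 h.
have tb : FracField.tofrac b != 0 by rewrite tofrac_eq0.
have te : FracField.tofrac e != 0 by rewrite tofrac_eq0.
apply/eqP; rewrite -tofrac_eq !tofracM; apply/eqP.
by rewrite -(divfK tb (FracField.tofrac a)) h mulrAC divfK.
Qed.

Lemma thetaKt_frac (K : fieldType) (p q : {poly K}) : q != 0 ->
  thetaKt (FracField.tofrac p / FracField.tofrac q) =
  FracField.tofrac ('X * (p^`() * q - p * q^`())) / FracField.tofrac (q ^+ 2).
Proof.
move=> q0.
rewrite /thetaKt.
set x := FracField.tofrac p / FracField.tofrac q.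
have e := @pi_frac _ x.
move: e; set n := \n_(repr x); set d := \d_(repr x) => e.
have d0 : d != 0 by apply: denom_ratioP.
have hE : n * q - p * d = 0.
  apply/eqP; rewrite subr_eq0; apply/eqP.
  have e2 : FracField.tofrac n / FracField.tofrac d = FracField.tofrac p / FracField.tofrac q by rewrite -e.
  exact: frac_eq_inv e2.
have hE' : n^`() * q + n * q^`() - (p^`() * d + p * d^`()) = 0.
  by rewrite -!derivM -derivB hE deriv0.
apply: frac_eq; rewrite ?expf_neq0 //.
apply/eqP; rewrite -subr_eq0; apply/eqP.
have -> : 'X * (n^`() * d - n * d^`()) * q ^+ 2 - 'X * (p^`() * q - p * q^`()) * d ^+ 2
  = 'X * (d * q * (n^`() * q + n * q^`() - (p^`() * d + p * d^`())) - (d^`() * q + q^`() * d) * (n * q - p * d)) by ring.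
by rewrite hE hE' !mulr0 subrr mulr0.
Qed.

Lemma thetaKt_tofrac0 (K : fieldType) : thetaKt (0 : Kt K) = 0.
Proof.
have -> : (0 : Kt K) = FracField.tofrac 0 / FracField.tofrac 1 by rewrite tofrac0 mul0r.
by rewrite thetaKt_frac ?oner_neq0 // deriv0 !(mul0r, mulr0, subrr).
Qed.

Lemma thetaKt1 (K : fieldType) : thetaKt (1 : Kt K) = 0.
Proof.
have -> : (1 : Kt K) = FracField.tofrac 1 / FracField.tofrac 1 by rewrite tofrac1 divr1.
have d1 : (1 : {poly K})^`() = 0 by rewrite -polyC1 derivC.
rewrite thetaKt_frac ?oner_neq0 // d1 !(mul0r, mulr0, mulr1, subrr).
by [].
Qed.

Lemma thetaKt_nat (K : fieldType) (b : bool) : thetaKt (b%:R : Kt K) = 0.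
Proof. by case: b; rewrite ?thetaKt1 ?thetaKt_tofrac0. Qed.

Lemma thetaKtN (K : fieldType) (x : Kt K) : thetaKt (- x) = - thetaKt x.
Proof.
have hd : \d_(repr x) != 0 by apply: denom_ratioP.
have -> : - x = FracField.tofrac (- \n_(repr x)) / FracField.tofrac \d_(repr x).
  by rewrite {1}(@pi_frac _ x) tofracN mulNr.
rewrite [in RHS](@pi_frac _ x) !thetaKt_frac //.
move: (\n_(repr x)) (\d_(repr x)) => p q.
rewrite derivN (_ : 'X * ((- p^`()) * q - - p * q^`()) = - ('X * (p^`() * q - p * q^`()))); last by ring.
by rewrite rmorphN mulNr.
Qed.

Lemma thetaKt_sign (K : fieldType) (k : nat) (x : Kt K) :
  thetaKt ((-1) ^+ k * x) = (-1) ^+ k * thetaKt x.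
Proof.
rewrite -signr_odd; case: (odd k); rewrite ?expr1 ?expr0 ?mul1r //.
by rewrite !mulN1r thetaKtN.
Qed.
Section M.
Variables (K : fieldType) (n : nat) (a : nat -> Kt K).
Hypothesis thN : forall x : Kt K, thetaKt (- x) = - thetaKt x.
Hypothesis thn : forall b : bool, thetaKt (b%:R : Kt K) = 0.

Lemma sum_sel (P : pred 'I_n) (i : 'I_n) :
  \sum_(k < n | P k) ((k : nat) == i)%:R = (P i)%:R :> Kt K.
Proof.
rewrite big_mkcond (bigD1 i) //= eqxx big1 ?addr0; first by case: (P i).
move=> k ki; case: (P k) => //.
by rewrite (_ : (k == i :> nat) = false) //; apply/negbTE.
Qed.

Lemma etaD_delta (i : 'I_n) : etaD n a i = delta_mx 0 i.
Proof.
case: i => i hi /=.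
elim: i hi => [|i IH] hi.
  apply/rowP => j; rewrite !mxE /=.
  by congr (_%:R); apply/eqP/eqP => [h|->//]; apply/val_inj.
rewrite /etaD iterS -/(etaD n a i) (IH (ltnW hi)).
apply/rowP => j; rewrite !mxE /= thn.
rewrite /lastc.
under eq_bigr do rewrite mxE /=.
rewrite sum_sel.
under [X in _ - X * _]eq_bigr do rewrite mxE /=.
rewrite sum_sel /=.
rewrite (_ : (i.+1 == n) = false); last by apply/negbTE; rewrite neq_ltn hi.
rewrite mul0r subr0 add0r.
rewrite eq_sym; congr (_%:R); apply/eqP/eqP => [->|h] //.
Qed.

Section Pair.
Variable B : 'rV[Kt K]_n -> 'rV[Kt K]_n -> Kt K.
Hypothesis hb : Defs.bilinear B.

Lemma B_addl x x' y : B (x + x') y = B x y + B x' y.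
Proof. by have := hb.1 1 x x' y; rewrite scale1r mul1r. Qed.
Lemma B_addr x y y' : B x (y + y') = B x y + B x y'.
Proof. by have := hb.2 1 x y y'; rewrite scale1r mul1r. Qed.
Lemma B_0l y : B 0 y = 0.
Proof.
have h := B_addl 0 0 y; rewrite addr0 in h.
by apply: (addrI (B 0 y)); rewrite addr0 -h.
Qed.
Lemma B_0r x : B x 0 = 0.
Proof.
have h := B_addr x 0 0; rewrite addr0 in h.
by apply: (addrI (B x 0)); rewrite addr0 -h.
Qed.
Lemma B_scalel c x y : B (c *: x) y = c * B x y.
Proof. by have := hb.1 c x 0 y; rewrite addr0 B_0l addr0. Qed.
Lemma B_scaler c x y : B x (c *: y) = c * B x y.
Proof. by have := hb.2 c x y 0; rewrite addr0 B_0r addr0. Qed.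
Lemma B_suml (I : Type) (r : seq I) (P : pred I) (F : I -> 'rV[Kt K]_n) y :
  B (\sum_(i <- r | P i) F i) y = \sum_(i <- r | P i) B (F i) y.
Proof. by elim/big_rec2: _ => [|i u v _ <-]; [rewrite B_0l|rewrite B_addl]. Qed.
Lemma B_sumr (I : Type) (r : seq I) (P : pred I) (F : I -> 'rV[Kt K]_n) x :
  B x (\sum_(i <- r | P i) F i) = \sum_(i <- r | P i) B x (F i).
Proof. by elim/big_rec2: _ => [|i u v _ <-]; [rewrite B_0r|rewrite B_addr]. Qed.
Lemma B_expandl x y : B x y = \sum_(i < n) x 0 i * B (delta_mx 0 i) y.
Proof.
rewrite {1}(row_sum_delta x) B_suml; apply: eq_bigr => i _; exact: B_scalel.
Qed.
Lemma B_expandr x y : B x y = \sum_(i < n) y 0 i * B x (delta_mx 0 i).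
Proof.
rewrite {1}(row_sum_delta y) B_sumr; apply: eq_bigr => i _; exact: B_scaler.
Qed.

Hypothesis hh : horizontal a B.
Lemma hor_step x y : B (thetaM a x) y = thetaKt (B x y) - B x (thetaM a y).
Proof. by rewrite hh addrK. Qed.

Hypothesis hv : forall i : nat, (i < n.-1)%N -> B (etaM K n) (etaD n a i) = 0.
Let gamma := B (etaM K n) (etaD n a n.-1).

Lemma vanish i : forall j, ((i + j < n.-1)%N -> B (etaD n a i) (etaD n a j) = 0) /\
  ((i + j = n.-1)%N -> B (etaD n a i) (etaD n a j) = (-1) ^+ i * gamma).
Proof.
elim: i => [|i IH] j.
  split; first exact: hv.
  by rewrite add0n => ->; rewrite expr0 mul1r.
rewrite /etaD iterS -!/(etaD n a _) hor_step.
have th0 : thetaKt (0 : Kt K) = 0 by apply: (thn false).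
split=> hij.
  rewrite (IH j).1; last by lia.
  by rewrite th0 (IH j.+1).1 ?subrr //; lia.
rewrite (IH j).1; last by lia.
rewrite th0 (IH j.+1).2; last by lia.
by rewrite exprS mulN1r mulNr sub0r.
Qed.
End Pair.

Lemma unique B B' : admissible_pairing a B -> admissible_pairing a B' ->
  B' (etaM K n) (etaD n a n.-1) = B (etaM K n) (etaD n a n.-1) ->
  forall x y, B' x y = B x y.
Proof.
case=> hb hh hv; case=> hb' hh' hv' hg.
have G : forall i, (i < n)%N -> forall j : 'I_n,
    B' (etaD n a i) (delta_mx 0 j) = B (etaD n a i) (delta_mx 0 j).
  elim=> [|i IH] hi j.
    rewrite -(etaD_delta j).
    change (etaD n a 0) with (etaM K n).
    case: (ltnP j n.-1) => hj; first by rewrite hv ?hv'.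
    have -> : (j : nat) = n.-1 by have := ltn_ord j; lia.
    exact: hg.
  rewrite /etaD iterS -/(etaD n a i) (hor_step _ hh) (hor_step _ hh') (IH (ltnW hi)).
  congr (_ - _).
  rewrite (B_expandr _ hb) (B_expandr _ hb').
  by apply: eq_bigr => k _; rewrite IH // ltnW.
move=> x y; rewrite (B_expandl _ hb' x) (B_expandl _ hb x).
apply: eq_bigr => i _; congr (_ * _).
rewrite (B_expandr _ hb') (B_expandr _ hb); apply: eq_bigr => j _.
by rewrite -(etaD_delta i) G.
Qed.

Hypothesis thS : forall (k : nat) (x : Kt K), thetaKt ((-1) ^+ k * x) = (-1) ^+ k * thetaKt x.

Lemma sgn_sq (k : nat) : (-1) ^+ k * (-1) ^+ k = 1 :> Kt K.
Proof. by rewrite -exprMn mulrNN mulr1 expr1n. Qed.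

Lemma sgn_pred (k : nat) : (0 < k)%N -> (-1) ^+ k = - (-1) ^+ k.-1 :> Kt K.
Proof. by case: k => // k _; rewrite exprS mulN1r. Qed.

Lemma symm (B : 'rV[Kt K]_n -> 'rV[Kt K]_n -> Kt K) : (0 < n)%N -> admissible_pairing a B -> eps_symmetric B.
Proof.
move=> hn hB; have [hb hh hv] := hB.
set s := (-1) ^+ n.+1 : Kt K.
pose B' := fun x y => s * B y x.
have hB' : admissible_pairing a B'.
  split.
  - split=> c x x' y; rewrite /B'.
      by rewrite hb.2 mulrDr mulrCA.
    by rewrite hb.1 mulrDr mulrCA.
  - by move=> x y; rewrite /B' thS hh mulrDr addrC.
  - move=> i hi; rewrite /B'.
    change (etaM K n) with (etaD n a 0).
    by rewrite (proj1 (@vanish B hh hv i 0)) ?mulr0 // addn0.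
have hg : B' (etaM K n) (etaD n a n.-1) = B (etaM K n) (etaD n a n.-1).
  rewrite /B'; change (etaM K n) with (etaD n a 0).
  rewrite (proj2 (@vanish B hh hv n.-1 0)) ?addn0 // mulrA.
  rewrite /s exprS sgn_pred // mulN1r opprK sgn_sq mul1r.
  by change (etaM K n) with (etaD n a 0).
have := unique _ _ hB hB' hg.
by move=> h x y; rewrite -h.
Qed.

Definition lastI (hn : (0 < n)%N) : 'I_n :=
  @Ordinal n n.-1 (@eq_ind_r _ _ is_true hn _ (ltn_predL n)).

Lemma thetaM_last (hn : (0 < n)%N) (k : 'I_n) :
  (thetaM a (delta_mx 0 (lastI hn))) 0 k = - a k.
Proof.
rewrite !mxE thn /lastc.
under eq_bigr do rewrite mxE /=.
rewrite sum_sel.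
under [X in _ - X * _]eq_bigr do rewrite mxE /=.
rewrite sum_sel /= prednK // eqxx mul1r.
by rewrite (_ : (n == k) = false) ?add0r //; apply/negbTE; rewrite neq_ltn ltn_ord orbT.
Qed.

Lemma gamma_deriv (B : 'rV[Kt K]_n -> 'rV[Kt K]_n -> Kt K) (hn : (0 < n)%N) :
  admissible_pairing a B ->
  n%:R * thetaKt (B (etaM K n) (etaD n a n.-1)) =
  - (2%:R * a n.-1 * B (etaM K n) (etaD n a n.-1)).
Proof.
case=> hb hh hv.
set g := B (etaM K n) (etaD n a n.-1).
have V := @vanish B hh hv.
set l := lastI hn.
have el : etaD n a n.-1 = delta_mx 0 l by rewrite -etaD_delta.
have eN : etaD n a n = thetaM a (delta_mx 0 l).
  transitivity (etaD n a n.-1.+1); first by rewrite prednK.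
  by rewrite /etaD iterS -/(etaD n a n.-1) el.
have tl : thetaM a (delta_mx 0 l) = \sum_(k < n) (- a k) *: delta_mx 0 k.
  rewrite {1}(row_sum_delta (thetaM a (delta_mx 0 l))).
  by apply: eq_bigr => k _; rewrite thetaM_last.
have f0 : B (etaD n a 0) (etaD n a n) = - (a n.-1 * g).
  rewrite eN tl (B_sumr _ hb) (bigD1 l) //= big1 ?addr0.
    by rewrite (B_scaler _ hb) -el mulNr.
  move=> k hk; rewrite (B_scaler _ hb) -etaD_delta (proj1 (V 0 k)) ?mulr0 //.
  have hk' : (k : nat) != n.-1 := hk.
  by have := ltn_ord k; lia.
have fN : B (etaD n a n) (etaD n a 0) = - (a n.-1 * ((-1) ^+ n.-1 * g)).
  rewrite eN tl (B_suml _ hb) (bigD1 l) //= big1 ?addr0.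
    by rewrite (B_scalel _ hb) -el mulNr (proj2 (V n.-1 0)) // addn0.
  move=> k hk; rewrite (B_scalel _ hb) -etaD_delta (proj1 (V k 0)) ?mulr0 //.
  have hk' : (k : nat) != n.-1 := hk.
  by have := ltn_ord k; lia.
have rec : forall i, (i < n)%N -> (-1) ^+ i * thetaKt g =
    B (etaD n a i.+1) (etaD n a (n - i.+1)) + B (etaD n a i) (etaD n a (n - i)).
  move=> i hi; rewrite -thS -(proj2 (V i (n.-1 - i)%N)); last by lia.
  rewrite hh.
  have -> : (n - i.+1 = n.-1 - i)%N by lia.
  by have -> : (n - i = (n.-1 - i).+1)%N by lia.
have tele : forall i, (i <= n)%N -> (-1) ^+ i * B (etaD n a i) (etaD n a (n - i)) =
    B (etaD n a 0) (etaD n a n) - i%:R * thetaKt g.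
  elim=> [|i IH] hi; first by rewrite expr0 mul1r subn0 mul0r subr0.
  have hr := rec i hi.
  have e1 : B (etaD n a i.+1) (etaD n a (n - i.+1)) =
      (-1) ^+ i * thetaKt g - B (etaD n a i) (etaD n a (n - i)) by rewrite hr addrK.
  rewrite e1 exprS.
  move: (IH (ltnW hi)).
  set s := (-1) ^+ i; set f := B (etaD n a i) (etaD n a (n - i)) => IH'.
  have ss : s * s = 1 by rewrite sgn_sq.
  rewrite -addn1 natrD.
  transitivity (- (s * s) * thetaKt g + s * f); first by ring.
  by rewrite ss IH'; ring.
have := tele n (leqnn n).
rewrite subnn fN sgn_pred //.
set s := (-1) ^+ n.-1 => h.
have ss : s * s = 1 by rewrite sgn_sq.
have h2 : n%:R * thetaKt g = - (a n.-1 * g) - (- s * - (a n.-1 * (s * g))).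
  by rewrite h f0; ring.
rewrite h2.
transitivity (- (a n.-1 * g) - (s * s) * (a n.-1 * g)); first by ring.
by rewrite ss; ring.
Qed.

Lemma nondeg_l (B : 'rV[Kt K]_n -> 'rV[Kt K]_n -> Kt K) :
  admissible_pairing a B -> B (etaM K n) (etaD n a n.-1) != 0 ->
  forall x, (forall y, B x y = 0) -> x = 0.
Proof.
case=> hb hh hv hg x H.
have V := @vanish B hh hv.
have key : forall m (j : 'I_n), (n.-1 - j < m)%N -> x 0 j = 0.
  elim=> [|m IH] j hj; first by [].
  have := H (etaD n a (n.-1 - j)).
  rewrite (B_expandl _ hb) (bigD1 j) //= big1 ?addr0.
    rewrite -etaD_delta (proj2 (V j (n.-1 - j)%N)); last by have := ltn_ord j; lia.
    move/eqP; rewrite mulf_eq0 => /orP [/eqP //|].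
    by rewrite mulf_eq0 signr_eq0 (negbTE hg).
  move=> k hk; have hk' : (k : nat) != j := hk.
  case: (ltnP k j) => hkj.
    by rewrite -etaD_delta (proj1 (V k _)) ?mulr0 //; have := ltn_ord j; lia.
  by rewrite IH ?mul0r //; have := ltn_ord k; lia.
by apply/rowP => j; rewrite mxE (key (n.-1 - j).+1).
Qed.

Lemma fil (B : 'rV[Kt K]_n -> 'rV[Kt K]_n -> Kt K) :
  (0 < n)%N -> admissible_pairing a B ->
  forall i : nat, (i <= n.-1)%N ->
        forall x y, inFil a i x -> inFil a (n - i) y -> B x y = 0.
Proof.
move=> hn [hb hh hv] i hi x y [f ->] [g ->].
have V := @vanish B hh hv.
rewrite (B_suml _ hb) big1 // => j _.
rewrite (B_scalel _ hb) (B_sumr _ hb) big1 ?mulr0 // => k _.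
rewrite (B_scaler _ hb) (proj1 (V j k)) ?mulr0 //.
by have := ltn_ord j; have := ltn_ord k; lia.
Qed.
End M.

Local Close Scope quotient_scope.

Theorem lemma1p3 (K : fieldType) (charK0 : [pchar K] =i pred0)
  (n : nat) (hn : (0 < n)%N) (a : nat -> {fraction {poly K}})
  (B : 'rV[{fraction {poly K}}]_n -> 'rV[{fraction {poly K}}]_n ->
       {fraction {poly K}})
  (hB : admissible_pairing a B) :
  let gamma := B (etaM K n) (etaD n a n.-1) in
  (* (i) uniqueness given gamma *)
  [/\ (forall B' : 'rV[{fraction {poly K}}]_n -> 'rV[{fraction {poly K}}]_n ->
           {fraction {poly K}},
         admissible_pairing a B' -> B' (etaM K n) (etaD n a n.-1) = gamma ->
         forall x y, B' x y = B x y),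
      (* (i) gamma = c beta^-1 for a beta-factor beta (in any differential
         field extension with field of constants K) *)
      (forall (E : fieldType) (d : E -> E)
              (iota : {rmorphism {fraction {poly K}} -> E}),
         diff_ext d iota ->
         (forall e : E, d e = 0 -> exists c : K, e = iota (constKt c)) ->
         forall b : E, beta_factor n a d iota b ->
         exists c : K, iota gamma = iota (constKt c) * b^-1),
      (* (ii) *)
      eps_symmetric B &
      (* (iii) *)
      gamma != 0 -> polarization a B].
Proof.
move=> gamma.
have thn := @thetaKt_nat K.
have U := @unique K n a. have Sy := @symm K n a. have GD := @gamma_deriv K n a. have ND := @nondeg_l K n a. have FI := @fil K n a.
have thS := @thetaKt_sign K.
have hS := Sy thn thS B hn hB.
split.
- move=> B' hB' hg'; exact: (U thn B B' hB hB' hg').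
- move=> E d iota [dadd dmul diota] hconst b [b0 hbeta].
  have hg := GD thn thS B hn hB.
  have nzK : (n%:R : Kt K) != 0.
    rewrite -(rmorph_nat (@FracField.tofrac {poly K})) tofrac_eq0 -polyC_natr polyC_eq0.
    by rewrite ((pcharf0P _).1 charK0) -lt0n.
  have nz : (n%:R : E) != 0 by rewrite -(rmorph_nat iota) fmorph_eq0.
  have de : d (iota gamma * b) = 0.
    apply: (mulfI nz); rewrite mulr0 dmul diota mulrDr mulrA -(rmorph_nat iota) -rmorphM.
    rewrite hg rmorph_nat mulrCA hbeta rmorphN !rmorphM !rmorph_nat /gamma; ring.
  have [c hc] := hconst _ de.
  by exists c; rewrite -hc mulfK.
- exact: hS.
- move=> hg0; split.
  + by case: hB.
  + exact: hS.
  + split; first exact: (ND thn B hB hg0).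
    move=> y H; apply: (ND thn B hB hg0) => x.
    by rewrite hS H mulr0.
  + by case: hB.
  + exact: (FI thn B hn hB).
Qed.
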